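(* Let $n$ be a positive integer that is a multiple of $3$ or a multiple of $4$. Then it is impossible to place $n-1$ queens on $\mathbb{Z}_n^2$ without conflict.
   Context: Queens are placed on distinct fields of the torus board $\mathbb{Z}_n^2$. Two queens at distinct fields $(x,y),(x',y')$ are in conflict iff $x=x'$, or $y=y'$, or $x+y=x'+y'$, or $x-y=x'-y'$ in $\mathbb{Z}_n$. A placement is without conflict if no two queens are in conflict. *)

(* Defs.v *)
From mathcomp Require Import all_boot.
Set Implicit Arguments. Unset Strict Implicit. Unset Printing Implicit Defensive.

Definition field (n : nat) := ('I_n * 'I_n)%type.

(* Two queens on distinct fields (x,y),(x',y') are in conflict iff
   x = x', or y = y', or x+y = x'+y', or x-y = x'-y' in Z_n.
   x - y = x' - y' (mod n) is written as x + y' = x' + y (mod n). *)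
Definition conflict (n : nat) (p q : field n) : bool :=
  [|| p.1 == q.1, p.2 == q.2,
      (p.1 + p.2 == q.1 + q.2 %[mod n]) |
      (p.1 + q.2 == q.1 + p.2 %[mod n])].

Definition conflict_free (n : nat) (Q : {set field n}) : bool :=
  [forall p in Q, forall q in Q, (p != q) ==> ~~ conflict p q].

(* Main.v *)
Require Import Defs.
From mathcomp Require Import all_boot all_algebra.
From mathcomp Require Import ring lra zify.
Import GRing.Theory Num.Theory.
Local Open Scope ring_scope.
Lemma arith (N m a b c e K L A B S T : int) :
  0 < N -> (N = 3 * m \/ N = 4 * m) ->
  2*S = N*(N-1) -> 6*T = N*(N-1)*(2*N-1) ->
  (S - (c : int)) + N*K = (S-a) + (S-b) ->
  (S - (e : int)) + N*L = (S-a) - (S-b) ->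
  (T - c^+2) + (T - e^+2) + N*(2*A) + N^+2*B = 2*(T - a^+2) + 2*(T - b^+2) ->
  False.
Proof.
move=> N0 hN hS hT h1 h2 h3.
have hc : c = a + b - S + N*K by lia.
have he : e = S + a - b + N*L by lia.
subst c e.
pose Z := (N-1)*(S-2*b) + 2*a*(K+L) + 2*(b-S)*(K-L) + N*(K^+2+L^+2).
pose W := 2*A + N*B - Z.
have key : 2*T - N*W = (N*(N-1) - 2*S)*(S-2*b) +
   ((2*(T - a^+2) + 2*(T - b^+2)) -
   ((T - (a + b - S + N*K)^+2) + (T - (S + a - b + N*L)^+2) + N*(2*A) + N^+2*B)).
  rewrite /W /Z; ring.
rewrite -h3 subrr addr0 -hS subrr mul0r in key.
have hW : 2*T = N*W by apply/eqP; rewrite -subr_eq0 key.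
have h3W : N * (3*W - (N-1)*(2*N-1)) = 0.
  have -> : N * (3*W - (N-1)*(2*N-1)) = 3*(N*W) - N*(N-1)*(2*N-1) by ring.
  rewrite -hW -hT; ring.
move/eqP: h3W; rewrite mulf_eq0 => /orP[/eqP|/eqP h3W]; first by move=> E; rewrite E in N0.
case: hN => hN; subst N.
  have : 3 * (W - 6* m^+2 + 3* m) = 1.
    apply/eqP; rewrite -subr_eq0 -h3W; apply/eqP; ring.
  move: (W - 6* m^+2 + 3* m) => X H; clear -H; lia.
have hS' : S = 2* m*(4* m-1).
  apply: (@mulfI _ 2) => //; rewrite hS; ring.
have hW2 : W = 2 * (A + 2* m*B - ((4* m-1)*(m*(4* m-1)-b) + a*(K+L) + (b-S)*(K-L) + 2* m*(K^+2+L^+2))).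
  rewrite /W /Z hS'; ring.
have : 6 * (A + 2* m*B - ((4* m-1)*(m*(4* m-1)-b) + a*(K+L) + (b-S)*(K-L) + 2* m*(K^+2+L^+2))) - 32* m^+2 + 12* m = 1.
  apply/eqP; rewrite -subr_eq0 -h3W hW2; apply/eqP; ring.
move: (A + _ - _) => X H; clear -H; lia.
Qed.
Lemma sum1 (n : nat) : 2 * \sum_(r < n) (r : int) = (n:int) * (n%:Z - 1).
Proof.
elim: n => [|n IH]; first by rewrite big_ord0.
rewrite big_ord_recr /= mulrDr IH -[n.+1]addn1 PoszD; ring.
Qed.

Lemma sum2 (n : nat) : 6 * \sum_(r < n) (r : int)^+2 = (n:int) * (n%:Z - 1) * (2 * (n:int) - 1).
Proof.
elim: n => [|n IH]; first by rewrite big_ord0.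
rewrite big_ord_recr /= mulrDr IH -[n.+1]addn1 PoszD; ring.
Qed.

Lemma zt (x y q r : nat) : (x + y = q * (y.+1) + r)%N -> (x:int) + y = r + y.+1 * q.
Proof. move=> H; lia. Qed.

Lemma missing (N : nat) (Q : {set field N.+1}) (f : field N.+1 -> 'I_N.+1) :
  #|Q| = N -> {in Q &, injective f} ->
  exists a : 'I_N.+1, forall g : 'I_N.+1 -> int,
    \sum_(p in Q) g (f p) = \sum_(r : 'I_N.+1) g r - g a.
Proof.
move=> hQ inj.
have hc : #|~: (f @: Q)| = 1%N.
  have := cardsC (f @: Q); rewrite card_in_imset // hQ card_ord => H.
  by apply/eqP; rewrite -(eqn_add2l N) H addn1.
have [a ha] := cards1P (introT eqP hc).
exists a => g.
rewrite -(big_imset _ inj) /= [in RHS](bigD1 a) //= addrC addrK.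
apply: eq_bigl => r.
by rewrite -[r \in f @: Q]negbK -in_setC ha in_set1.
Qed.

Lemma cf_inj (n : nat) (Q : {set field n}) p q :
  conflict_free Q -> p \in Q -> q \in Q -> conflict p q -> p = q.
Proof.
move=> /forallP /(_ p) /implyP /(_ _) H pQ qQ c.
move: (H pQ) => /forall_inP /(_ q qQ) /implyP.
case: eqVneq => // _ /(_ isT); by rewrite c.
Qed.
Arguments cf_inj {n Q p q}.

Local Close Scope ring_scope.
Theorem mainTheorem6 (n : nat) :
  0 < n -> (3 %| n) || (4 %| n) ->
  ~ exists Q : {set field n}, #|Q| = n.-1 /\ conflict_free Q.
Proof.
Local Open Scope ring_scope.
case: n => // N _ h34 [Q [hQ hcf]].
rewrite /= in hQ.
pose fx (p : field N.+1) := p.1.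
pose fy (p : field N.+1) := p.2.
pose fs (p : field N.+1) : 'I_N.+1 := inord ((p.1 + p.2) %% N.+1).
pose fe (p : field N.+1) : 'I_N.+1 := inord ((p.1 + (N.+1 - p.2)) %% N.+1).
have vfs p : (fs p : nat) = ((p.1 + p.2) %% N.+1)%N by rewrite inordK // ltn_pmod.
have vfe p : (fe p : nat) = ((p.1 + (N.+1 - p.2)) %% N.+1)%N by rewrite inordK // ltn_pmod.
have [a Ha] : exists a : 'I_N.+1, forall g : 'I_N.+1 -> int,
    \sum_(p in Q) g (fx p) = \sum_(r : 'I_N.+1) g r - g a.
  apply: missing => // p q pQ qQ E; apply: (cf_inj hcf pQ qQ).
  by rewrite /fx /= in E; rewrite /conflict E eqxx.
have [b Hb] : exists b : 'I_N.+1, forall g : 'I_N.+1 -> int,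
    \sum_(p in Q) g (fy p) = \sum_(r : 'I_N.+1) g r - g b.
  apply: missing => // p q pQ qQ E; apply: (cf_inj hcf pQ qQ).
  by rewrite /fy /= in E; rewrite /conflict E eqxx orbT.
have [c Hc] : exists c : 'I_N.+1, forall g : 'I_N.+1 -> int,
    \sum_(p in Q) g (fs p) = \sum_(r : 'I_N.+1) g r - g c.
  apply: missing => // p q pQ qQ E; apply: (cf_inj hcf pQ qQ).
  rewrite /conflict; have := congr1 val E; rewrite /= !vfs => ->.
  by rewrite eqxx !orbT.
have [e He] : exists e : 'I_N.+1, forall g : 'I_N.+1 -> int,
    \sum_(p in Q) g (fe p) = \sum_(r : 'I_N.+1) g r - g e.
  apply: missing => // p q pQ qQ E; apply: (cf_inj hcf pQ qQ).
  have := congr1 val E; rewrite /= !vfe => E'.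
  have E2 : ((p.1 + (N.+1 - p.2)) + (p.2 + q.2) = (q.1 + (N.+1 - q.2)) + (p.2 + q.2) %[mod N.+1])%N.
    by rewrite -modnDml E' modnDml.
  have H1 : ((p.1 + (N.+1 - p.2)) + (p.2 + q.2) = (p.1 + q.2) + N.+1)%N.
    have := ltn_ord p.2; lia.
  have H2 : ((q.1 + (N.+1 - q.2)) + (p.2 + q.2) = (q.1 + p.2) + N.+1)%N.
    have := ltn_ord q.2; lia.
  rewrite H1 H2 !modnDr in E2.
  by rewrite /conflict E2 eqxx !orbT.
pose K (p : field N.+1) : int := Posz ((p.1 + p.2) %/ N.+1).
pose L (p : field N.+1) : int := Posz ((p.1 + (N.+1 - p.2)) %/ N.+1) - 1.
have hK (p : field N.+1) : (p.1 : int) + (p.2 : int) = (fs p : int) + (N.+1 : int) * K p.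
  rewrite vfs /K; have := divn_eq (p.1 + p.2) N.+1; lia.
have hL (p : field N.+1) : (p.1 : int) - (p.2 : int) = (fe p : int) + (N.+1 : int) * L p.
  rewrite vfe /L; have := divn_eq (p.1 + (N.+1 - p.2)) N.+1.
  have := ltn_ord p.2; lia.
pose A (p : field N.+1) : int := (fs p : int) * K p + (fe p : int) * L p.
pose B (p : field N.+1) : int := K p ^+ 2 + L p ^+ 2.
have hsq (p : field N.+1) : (fs p : int)^+2 + (fe p : int)^+2 + (N.+1 : int) * (2 * A p) + (N.+1 : int)^+2 * B p
    = 2 * (p.1 : int)^+2 + 2 * (p.2 : int)^+2.
  rewrite /A /B.
  have -> : (fs p : int) = (p.1 : int) + (p.2 : int) - (N.+1 : int) * K p by rewrite hK addrK.
  have -> : (fe p : int) = (p.1 : int) - (p.2 : int) - (N.+1 : int) * L p by rewrite hL addrK.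
  ring.
have S1 : \sum_(p in Q) (fx p : int) = \sum_(r : 'I_N.+1) (r : int) - (a : int) by exact: (Ha (fun r => (r : int))).
have S2 : \sum_(p in Q) (fy p : int) = \sum_(r : 'I_N.+1) (r : int) - (b : int) by exact: (Hb (fun r => (r : int))).
have S3 : \sum_(p in Q) (fs p : int) = \sum_(r : 'I_N.+1) (r : int) - (c : int) by exact: (Hc (fun r => (r : int))).
have S4 : \sum_(p in Q) (fe p : int) = \sum_(r : 'I_N.+1) (r : int) - (e : int) by exact: (He (fun r => (r : int))).
have T1 : \sum_(p in Q) (fx p : int)^+2 = \sum_(r : 'I_N.+1) (r : int)^+2 - (a : int)^+2 by exact: (Ha (fun r => (r : int)^+2)).
have T2 : \sum_(p in Q) (fy p : int)^+2 = \sum_(r : 'I_N.+1) (r : int)^+2 - (b : int)^+2 by exact: (Hb (fun r => (r : int)^+2)).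
have T3 : \sum_(p in Q) (fs p : int)^+2 = \sum_(r : 'I_N.+1) (r : int)^+2 - (c : int)^+2 by exact: (Hc (fun r => (r : int)^+2)).
have T4 : \sum_(p in Q) (fe p : int)^+2 = \sum_(r : 'I_N.+1) (r : int)^+2 - (e : int)^+2 by exact: (He (fun r => (r : int)^+2)).
set S := \sum_(r : 'I_N.+1) (r : int) in S1 S2 S3 S4 *.
set T := \sum_(r : 'I_N.+1) (r : int)^+2 in T1 T2 T3 T4 *.
have E1 : (S - (c : int)) + (N.+1 : int) * \sum_(p in Q) K p = (S - (a : int)) + (S - (b : int)).
  rewrite -S1 -S2 -S3 mulr_sumr -!big_split /=; apply: eq_bigr => p _; by rewrite hK.
have E2 : (S - (e : int)) + (N.+1 : int) * \sum_(p in Q) L p = (S - (a : int)) - (S - (b : int)).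
  rewrite -S1 -S2 -S4 mulr_sumr -sumrB -!big_split /=; apply: eq_bigr => p _; by rewrite hL.
have E3 : (T - (c : int)^+2) + (T - (e : int)^+2) + (N.+1 : int) * (2 * \sum_(p in Q) A p)
     + (N.+1 : int)^+2 * \sum_(p in Q) B p = 2 * (T - (a : int)^+2) + 2 * (T - (b : int)^+2).
  rewrite -T1 -T2 -T3 -T4 !mulr_sumr -!big_split /=; apply: eq_bigr => p _; exact: hsq.
have [m hN] : exists m : int, (N.+1 : int) = 3 * m \/ (N.+1 : int) = 4 * m.
  case/orP: h34 => /dvdnP [m hm]; exists (m : int); [left|right]; rewrite hm; lia.
apply: (@arith (N.+1 : int) m a b c e (\sum_(p in Q) K p) (\sum_(p in Q) L p)
  (\sum_(p in Q) A p) (\sum_(p in Q) B p) S T _ hN _ _ E1 E2 E3).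
- by [].
- exact: sum1.
- exact: sum2.
Qed.
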